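(* For each equivalence class of the relation $\alpha\sim\gamma\iff\mathsf{rajcode}(\alpha)=\mathsf{rajcode}(\gamma)$ on weak compositions, there is a unique snowy $\alpha$ in the class. Moreover, if $\gamma\sim\alpha$ and $\alpha$ is snowy, then $\gamma_r\ge\alpha_r$ for all $r$.
   Context: A weak composition is an infinite sequence of nonnegative integers with finitely many positive entries; it is snowy if its positive entries are distinct. $D(\alpha)=\{(r,c):1\le c\le\alpha_r\}$ ($(r,c)$ in row $r$, row 1 on top, column $c$). For a diagram $D$, $\mathsf{snow}(D)$ is built by iterating through rows from bottom to top: in row $r$ take the rightmost cell $(r,c)\in D$ such that column $c$ contains no dark cloud yet; if it exists label it a dark cloud and add snowflake cells at $(r',c)$ for all $r'<r$ with $(r',c)\notin D$. $\mathsf{rajcode}(\alpha)$ is the weak composition whose $i$-th entry is the number of cells of $\mathsf{snow}(D(\alpha))$ in row $i$. *)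

(* Defs.v *)
From mathcomp Require Import all_boot.
Set Implicit Arguments. Unset Strict Implicit. Unset Printing Implicit Defensive.

(* A weak composition alpha = (alpha_1, alpha_2, ...) is represented by a
   finite list s : seq nat, padded with zeros: alpha_{i+1} = nth 0 s i.
   Two lists represent the same weak composition iff they agree at every
   index (i.e. differ only by trailing zeros). *)
Definition wc_eq (s t : seq nat) : Prop := forall i, nth 0 s i = nth 0 t i.

Definition snowy (s : seq nat) : Prop :=
  forall i j, i <> j -> 0 < nth 0 s i -> nth 0 s i <> nth 0 s j.

(* Columns of the dark clouds of snow(D(alpha)), computed by processing rows
   from bottom to top: for the list a :: t, the rows of t (lower rows) are
   processed first, then row a, where the rightmost cell (r,c), 1 <= c <= a,
   whose column c has no dark cloud yet becomes a dark cloud. *)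
Fixpoint dark_cols (s : seq nat) : seq nat :=
  match s with
  | [::] => [::]
  | a :: t =>
      let d := dark_cols t in
      match [seq c <- rev (iota 1 a) | c \notin d] with
      | c :: _ => c :: d
      | [::] => d
      end
  end.

(* Number of cells of snow(D(alpha)) in each row: the a cells of D in the row,
   plus one snowflake for each dark cloud strictly below the row lying in a
   column c not in D in this row (i.e. c > a). *)
Fixpoint rajcode (s : seq nat) : seq nat :=
  match s with
  | [::] => [::]
  | a :: t => (a + count (fun c => a < c) (dark_cols t)) :: rajcode t
  end.

(* Main.v *)
Require Import Defs.
From mathcomp Require Import all_boot zify.
Set Implicit Arguments. Unset Strict Implicit.

Lemma count_split d z : count (fun c => z < c) d = count (fun c => z.+1 < c) d + count (pred1 z.+1) d.
Proof.
elim: d => //= c d ->.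
by have [H|H|H] := ltngtP z.+1 c; rewrite /=; lia.
Qed.

Definition h (d : seq nat) a := head 0 [seq c <- rev (iota 1 a) | c \notin d].

Lemma h0 d : h d 0 = 0. Proof. by []. Qed.

Lemma h_rec d a : h d a.+1 = if a.+1 \notin d then a.+1 else h d a.
Proof.
rewrite /h.
have -> : iota 1 a.+1 = iota 1 a ++ [:: a.+1] by rewrite -[a.+1]addn1 iotaD add1n addn1.
rewrite rev_cat /=.
by case: ifP.
Qed.

Lemma h_le d a : h d a <= a.
Proof. elim: a => // a IH; rewrite h_rec; case: ifP => //; lia. Qed.

Lemma h_notin d a : 0 < h d a -> h d a \notin d.
Proof. elim: a => // a IH; rewrite h_rec; case: ifP => //. Qed.

Lemma h_id d a : a \notin d -> h d a = a.
Proof. case: a => // a; rewrite h_rec => ->. done. Qed.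

Definition E d x := x + count (fun c => x < c) d.

Lemma E_h d a : uniq d -> E d (h d a) = E d a.
Proof.
move=> ud; elim: a => // a IH; rewrite h_rec; case: ifP => // /negbFE ad.
rewrite IH /E count_split (count_uniq_mem _ ud) ad /=. lia.
Qed.

Lemma E_step d z : uniq d -> E d z <= E d z.+1.
Proof.
move=> ud; rewrite /E count_split (count_uniq_mem _ ud).
case: (z.+1 \in d) => /=; lia.
Qed.

Lemma E_mono d x y : uniq d -> x <= y -> E d x <= E d y.
Proof.
move=> ud; elim: y => [|y IH]; first by rewrite leqn0 => /eqP ->.
rewrite leq_eqVlt => /orP [/eqP -> //|]; rewrite ltnS => /IH H.
exact: leq_trans H (E_step y ud).
Qed.

Lemma E_strict d x y : uniq d -> x < y -> y \notin d -> E d x < E d y.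
Proof.
move=> ud; case: y => // y xy yd.
have H1 := E_mono ud (xy : x <= y).
suff : E d y.+1 = (E d y).+1 by lia.
rewrite /E (count_split d y) (count_uniq_mem _ ud) (negbTE yd) /=. lia.
Qed.

Lemma E_inj d x y : uniq d -> (x = 0 \/ x \notin d) -> (y = 0 \/ y \notin d) ->
  E d x = E d y -> x = y.
Proof.
move=> ud Hx Hy Exy.
have [xy|yx|//] := ltngtP x y.
- case: Hy => [Hy|Hy]; first lia.
  have := E_strict ud xy Hy; lia.
- case: Hx => [Hx|Hx]; first lia.
  have := E_strict ud yx Hx; lia.
Qed.

Lemma dc_cons a t : dark_cols (a :: t) =
  if 0 < h (dark_cols t) a then h (dark_cols t) a :: dark_cols t else dark_cols t.
Proof.
rewrite /= /h.
case E0: [seq c <- rev (iota 1 a) | c \notin dark_cols t] => [|c l] //=.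
have : c \in c :: l by rewrite mem_head.
by rewrite -E0 mem_filter mem_rev mem_iota => /andP [_ /andP [-> _]].
Qed.

Lemma uniq_dc s : uniq (dark_cols s).
Proof.
elim: s => // a t IH; rewrite dc_cons; case: ifP => // /h_notin H /=.
by rewrite H IH.
Qed.

Fixpoint cloud (s : seq nat) : seq nat :=
  match s with
  | [::] => [::]
  | a :: t => h (dark_cols t) a :: cloud t
  end.

Lemma dc_cloud s : dark_cols s = [seq c <- cloud s | 0 < c].
Proof.
elim: s => // a t IH; rewrite dc_cons /=; case: ifP => // _; by rewrite IH.
Qed.

Lemma snowy_nil : snowy [::].
Proof. by move=> [|i] [|j]. Qed.

Lemma snowy_cons x t : snowy (x :: t) <-> snowy t /\ (0 < x -> x \notin t).
Proof.
split.
- move=> S; split.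
  + move=> i j ij; exact: (S i.+1 j.+1 (fun e => ij (eq_add_S _ _ e))).
  + move=> xp; apply/negP => xt.
    have := S 0 (index x t).+1 (fun e => ltac:(discriminate)) xp.
    by rewrite /= nth_index.
- move=> [S X] [|i] [|j] //= ij.
  + move=> xp e; move: (X xp); rewrite e.
    case: (ltnP j (size t)) => jt; first by rewrite mem_nth.
    by move: xp; rewrite e nth_default.
  + move=> ip e; move: (X ltac:(by rewrite -e)); rewrite -e.
    case: (ltnP i (size t)) => it; first by rewrite mem_nth.
    by move: ip; rewrite nth_default.
  + apply: S; lia.
Qed.

Lemma snowy_cloud g : snowy (cloud g).
Proof.
elim: g => [|a t IH]; first exact: snowy_nil.
apply/snowy_cons; split => //; set c := h _ a => hp.
have := h_notin hp; rewrite -/c dc_cloud mem_filter hp /= => //.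
Qed.

Lemma cloud_id s : snowy s -> cloud s = s.
Proof.
elim: s => // x t IH /snowy_cons [S X] /=.
rewrite (IH S); congr (_ :: _).
case: x X => [|x] X; first by [].
apply: h_id; rewrite dc_cloud (IH S) mem_filter /=; exact: X.
Qed.

Lemma dc_snowy s : snowy s -> dark_cols s = [seq c <- s | 0 < c].
Proof. by move=> S; rewrite dc_cloud cloud_id. Qed.

Lemma dc_cloud_eq g : dark_cols (cloud g) = dark_cols g.
Proof. by rewrite (dc_snowy (@snowy_cloud g)) -dc_cloud. Qed.

Lemma raj_cloud g : rajcode (cloud g) = rajcode g.
Proof.
elim: g => // a t IH /=; rewrite IH dc_cloud_eq.
congr (_ :: _); exact: (E_h _ (uniq_dc t)).
Qed.

Lemma cloud_le g r : nth 0 (cloud g) r <= nth 0 g r.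
Proof. elim: g r => [|a t IH] [|r] //=; exact: h_le. Qed.

Lemma raj_ge s i : nth 0 s i <= nth 0 (rajcode s) i.
Proof. elim: s i => [|a t IH] [|i] //=; exact: leq_addr. Qed.

Lemma wc_nil s : wc_eq [::] (rajcode s) -> wc_eq [::] s.
Proof.
move=> H i; have := raj_ge s i; rewrite -H nth_nil; lia.
Qed.

Lemma wc_sym s t : wc_eq s t -> wc_eq t s.
Proof. by move=> H i. Qed.

Lemma filter_nil t : wc_eq [::] t -> [seq c <- t | 0 < c] = [::].
Proof.
elim: t => // y t IH H /=.
have := H 0; rewrite /= => <-; rewrite /=; apply: IH => i; have := H i.+1; by rewrite /= !nth_nil.
Qed.

Lemma wc_filter s t : wc_eq s t -> [seq c <- s | 0 < c] = [seq c <- t | 0 < c].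
Proof.
elim: s t => [|x s IH] t H; first by rewrite (filter_nil H).
case: t H => [|y t] H.
- by rewrite [RHS]/= filter_nil //; apply: wc_sym.
- have := H 0; rewrite /= => ->; rewrite (IH t) // => i; exact: (H i.+1).
Qed.

Lemma uniqueness a b : snowy a -> snowy b -> wc_eq (rajcode a) (rajcode b) -> wc_eq a b.
Proof.
elim: a b => [|x a IH] b Sa Sb H.
- exact: wc_nil.
case: b Sb H => [|y b] Sb H.
- apply: wc_sym; apply: wc_nil; exact: wc_sym.
move/snowy_cons: Sa => [Sa Xa]; move/snowy_cons: Sb => [Sb Xb].
have Ht : wc_eq a b by apply: IH => // i; exact: (H i.+1).
have Hd : dark_cols a = dark_cols b by rewrite !dc_snowy // (wc_filter Ht).
have := H 0; rewrite /= -Hd => Hxy.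
have Cx : x = 0 \/ x \notin dark_cols a.
  case: (posnP x) => [->|xp]; [by left|right].
  by rewrite dc_snowy // mem_filter xp /= Xa.
have Cy : y = 0 \/ y \notin dark_cols a.
  case: (posnP y) => [->|yp]; [by left|right].
  by rewrite Hd dc_snowy // mem_filter yp /= Xb.
have xy : x = y by apply: (@E_inj (dark_cols a)) => //; exact: uniq_dc.
by subst y => [] [|i] //=.
Qed.

Theorem lemma4p5 :
  (forall g : seq nat, exists a : seq nat,
      snowy a /\ wc_eq (rajcode a) (rajcode g)) /\
  (forall a b : seq nat, snowy a -> snowy b ->
      wc_eq (rajcode a) (rajcode b) -> wc_eq a b) /\
  (forall a g : seq nat, snowy a -> wc_eq (rajcode g) (rajcode a) ->
      forall r, nth 0 a r <= nth 0 g r).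
Proof.
split; [|split].
- move=> g; exists (cloud g); split; first exact: snowy_cloud.
  by rewrite raj_cloud.
- exact: uniqueness.
- move=> a g Sa H r.
  have := uniqueness (@snowy_cloud g) Sa; rewrite raj_cloud => /(_ H r) <-.
  exact: cloud_le.
Qed.
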